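(* Let $X$ be a G-space and suppose there exists a hypercyclic operator $T_0\in L(X)$. Then every $A\in\Sigma(X)$ is an orbit, i.e. there exist $T\in L(X)$ and $x\in X$ with $A=O(T,x)=\{T^nx:n\in\mathbb{Z}_+\}$.
   Context: All topological vector spaces are Hausdorff, over $\mathbb{K}\in\{\mathbb{R},\mathbb{C}\}$. For a topological vector space $X$, $L(X)$ is the algebra of continuous linear operators on $X$ and $GL(X)$ is the group of invertible $T\in L(X)$ with $T^{-1}\in L(X)$. ''Countable'' means infinite countable. $\Sigma(X)$ denotes the set of all countable dense linearly independent subsets of $X$. $T\in L(X)$ is hypercyclic if there is $x\in X$ (a hypercyclic vector) whose orbit $O(T,x)=\{T^nx:n\in\mathbb{Z}_+\}$ is dense in $X$. A locally convex space $X$ is a G-space if $\Sigma(X)\neq\varnothing$ and $GL(X)$ acts transitively on $\Sigma(X)$ (i.e. for all $A,B\in\Sigma(X)$ there is $J\in GL(X)$ with $J(A)=B$). A subset $A\subseteq X$ is called an orbit if $A=O(T,x)$ for some $T\in L(X)$, $x\in X$. *)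

(* Defs.v *)
From Stdlib Require Import Reals List.
Open Scope R_scope.

Inductive Kind := KReal | KCplx.

Definition scal (k : Kind) : Type :=
  match k with KReal => R | KCplx => (R * R)%type end.

Definition szero (k : Kind) : scal k :=
  match k return scal k with KReal => 0 | KCplx => (0, 0) end.
Definition sone (k : Kind) : scal k :=
  match k return scal k with KReal => 1 | KCplx => (1, 0) end.
Definition sadd (k : Kind) : scal k -> scal k -> scal k :=
  match k return scal k -> scal k -> scal k with
  | KReal => Rplus
  | KCplx => fun a b => (fst a + fst b, snd a + snd b) end.
Definition sopp (k : Kind) : scal k -> scal k :=
  match k return scal k -> scal k with
  | KReal => Ropp
  | KCplx => fun a => (- fst a, - snd a) end.
Definition smul (k : Kind) : scal k -> scal k -> scal k :=
  match k return scal k -> scal k -> scal k with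
  | KReal => Rmult
  | KCplx => fun a b => (fst a * fst b - snd a * snd b,
                         fst a * snd b + snd a * fst b) end.
Definition sabs (k : Kind) : scal k -> R :=
  match k return scal k -> R with
  | KReal => Rabs
  | KCplx => fun a => sqrt (fst a * fst a + snd a * snd a) end.
Definition sofR (k : Kind) : R -> scal k :=
  match k return R -> scal k with
  | KReal => fun t => t
  | KCplx => fun t => (t, 0) end.

Record TVS (k : Kind) := {
  car :> Type;
  vadd : car -> car -> car;
  vzero : car;
  vopp : car -> car;
  vscal : scal k -> car -> car;
  vadd_assoc : forall x y z, vadd x (vadd y z) = vadd (vadd x y) z;
  vadd_comm : forall x y, vadd x y = vadd y x;
  vadd_0 : forall x, vadd x vzero = x;
  vadd_opp : forall x, vadd x (vopp x) = vzero;
  vscal_distr_v : forall (a : scal k) (x y : car), vscal a (vadd x y) = vadd (vscal a x) (vscal a y);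
  vscal_distr_s : forall (a b : scal k) (x : car), vscal (sadd k a b) x = vadd (vscal a x) (vscal b x);
  vscal_assoc : forall (a b : scal k) (x : car), vscal (smul k a b) x = vscal a (vscal b x);
  vscal_1 : forall x, vscal (sone k) x = x;
  vopen : (car -> Prop) -> Prop;
  vopen_full : vopen (fun _ => True);
  vopen_inter : forall U V, vopen U -> vopen V -> vopen (fun x => U x /\ V x);
  vopen_union : forall F : (car -> Prop) -> Prop,
      (forall U, F U -> vopen U) -> vopen (fun x => exists U, F U /\ U x);
  vhausdorff : forall x y, x <> y -> exists U V, vopen U /\ vopen V /\ U x /\ V y /\
      (forall z, ~ (U z /\ V z));
  vadd_cont : forall x y W, vopen W -> W (vadd x y) ->
      exists U V, vopen U /\ vopen V /\ U x /\ V y /\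
        (forall u v, U u -> V v -> W (vadd u v));
  vscal_cont : forall (a : scal k) (x : car) W, vopen W -> W (vscal a x) ->
      exists eps U, eps > 0 /\ vopen U /\ U x /\
        (forall (b : scal k) u, sabs k (sadd k b (sopp k a)) < eps -> U u -> W (vscal b u))
}.

Arguments vadd {k X} : rename.
Arguments vzero {k} X : rename.
Arguments vscal {k X} : rename.
Arguments vopen {k X} : rename.

Section Defs.
Context {k : Kind} (X : TVS k).

Definition convex (V : X -> Prop) : Prop :=
  forall x y t, V x -> V y -> 0 <= t <= 1 ->
    V (vadd (vscal (sofR k t) x) (vscal (sofR k (1 - t)) y)).

Definition locally_convex : Prop :=
  forall U : X -> Prop, vopen U -> U (vzero X) ->
    exists V : X -> Prop, vopen V /\ V (vzero X) /\ convex V /\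
      (forall x, V x -> U x).

Definition dense (A : X -> Prop) : Prop :=
  forall U : X -> Prop, vopen U -> (exists x, U x) -> exists x, U x /\ A x.

Definition countable_inf (A : X -> Prop) : Prop :=
  exists e : nat -> X, (forall m n, e m = e n -> m = n) /\
    (forall y, A y <-> exists n, e n = y).

Fixpoint lsum (l : list (scal k * X)) : X :=
  match l with
  | nil => vzero X
  | p :: l' => vadd (vscal (fst p) (snd p)) (lsum l')
  end.

Definition lin_indep (A : X -> Prop) : Prop :=
  forall l : list (scal k * X), NoDup (map snd l) ->
    Forall (fun p => A (snd p)) l -> lsum l = vzero X ->
    Forall (fun p => fst p = szero k) l.

Definition Sigma (A : X -> Prop) : Prop :=
  countable_inf A /\ dense A /\ lin_indep A.

Definition linear (T : X -> X) : Prop :=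
  (forall x y, T (vadd x y) = vadd (T x) (T y)) /\
  (forall a x, T (vscal a x) = vscal a (T x)).

Definition continuous (T : X -> X) : Prop :=
  forall U : X -> Prop, vopen U -> vopen (fun x => U (T x)).

Definition Lop (T : X -> X) : Prop := linear T /\ continuous T.

Definition GLop (T : X -> X) : Prop :=
  Lop T /\ exists S, Lop S /\ (forall x, S (T x) = x) /\ (forall x, T (S x) = x).

Definition orbit (T : X -> X) (x : X) : X -> Prop :=
  fun y => exists n : nat, y = Nat.iter n T x.

Definition hypercyclic (T : X -> X) : Prop :=
  Lop T /\ exists x, dense (orbit T x).

Definition image (J : X -> X) (A : X -> Prop) : X -> Prop :=
  fun y => exists x, A x /\ J x = y.

Definition G_space : Prop :=
  locally_convex /\ (exists A, Sigma A) /\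
  (forall A B, Sigma A -> Sigma B ->
     exists J, GLop J /\ forall y, image J A y <-> B y).

End Defs.

(* Main.v *)
Require Import Defs.
From Stdlib Require Import Reals List.
From Stdlib Require Import FinFun Lra Lia Classical ClassicalEpsilon FunctionalExtensionality PropExtensionality.
From Coquelicot Require Complex.
Open Scope R_scope.


Definition sinv (k : Kind) : scal k -> scal k :=
  match k return scal k -> scal k with
  | KReal => fun a => / a
  | KCplx => fun a => (fst a / (fst a * fst a + snd a * snd a),
                       - snd a / (fst a * fst a + snd a * snd a)) end.

Ltac scal_ring k :=
  destruct k; simpl in *;
  [ ring | repeat match goal with p : (R * R)%type |- _ => destruct p end; simpl; f_equal; ring ].

Lemma sadd_comm k (a b : scal k) : sadd k a b = sadd k b a.
Proof. scal_ring k. Qed.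
Lemma sadd_assoc k (a b c : scal k) : sadd k a (sadd k b c) = sadd k (sadd k a b) c.
Proof. scal_ring k. Qed.
Lemma sadd_0l k (a : scal k) : sadd k (szero k) a = a.
Proof. scal_ring k. Qed.
Lemma sadd_0r k (a : scal k) : sadd k a (szero k) = a.
Proof. scal_ring k. Qed.
Lemma sadd_opp k (a : scal k) : sadd k a (sopp k a) = szero k.
Proof. scal_ring k. Qed.
Lemma smul_comm k (a b : scal k) : smul k a b = smul k b a.
Proof. scal_ring k. Qed.
Lemma smul_assoc k (a b c : scal k) : smul k a (smul k b c) = smul k (smul k a b) c.
Proof. scal_ring k. Qed.
Lemma smul_1l k (a : scal k) : smul k (sone k) a = a.
Proof. scal_ring k. Qed.
Lemma smul_0l k (a : scal k) : smul k (szero k) a = szero k.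
Proof. scal_ring k. Qed.
Lemma smul_distr k (a b c : scal k) : smul k a (sadd k b c) = sadd k (smul k a b) (smul k a c).
Proof. scal_ring k. Qed.
Lemma smul_oppl k (a b : scal k) : smul k (sopp k a) b = sopp k (smul k a b).
Proof. scal_ring k. Qed.
Lemma sopp_opp k (a : scal k) : sopp k (sopp k a) = a.
Proof. scal_ring k. Qed.
Lemma sopp_add k (a b : scal k) : sopp k (sadd k a b) = sadd k (sopp k a) (sopp k b).
Proof. scal_ring k. Qed.
Lemma sopp_0 k : sopp k (szero k) = szero k.
Proof. scal_ring k. Qed.

Lemma sone_neq0 k : sone k <> szero k.
Proof. destruct k; simpl; intro H; [lra| injection H; lra]. Qed.

Lemma sinv_r k (a : scal k) : a <> szero k -> smul k a (sinv k a) = sone k.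
Proof.
  destruct k; simpl; intro H.
  - field; auto.
  - destruct a as [x y]; simpl in *.
    assert (x * x + y * y <> 0).
    { intro E. apply H. assert (x = 0) by nra. assert (y = 0) by nra. subst; auto. }
    f_equal; field; auto.
Qed.

Lemma sabs_C (a : scal KCplx) : sabs KCplx a = Complex.Cmod a.
Proof. unfold Complex.Cmod; simpl; f_equal; ring. Qed.

Lemma sabs_ge0 k (a : scal k) : 0 <= sabs k a.
Proof. destruct k; simpl. apply Rabs_pos. apply sqrt_pos. Qed.
Lemma sabs_0 k : sabs k (szero k) = 0.
Proof. destruct k; simpl. apply Rabs_R0. replace (0*0+0*0) with 0 by ring. apply sqrt_0. Qed.
Lemma sabs_eq0 k (a : scal k) : sabs k a = 0 -> a = szero k.
Proof. destruct k. simpl. intro H; destruct (Req_dec a 0); auto; exfalso; apply (Rabs_no_R0 a); auto.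
  intro H. rewrite (sabs_C a) in *. apply Complex.Cmod_eq_0 in H. exact H. Qed.
Lemma sabs_triangle k (a b : scal k) : sabs k (sadd k a b) <= sabs k a + sabs k b.
Proof. destruct k. apply Rabs_triang. rewrite !sabs_C. apply (Complex.Cmod_triangle a b). Qed.
Lemma sabs_mul k (a b : scal k) : sabs k (smul k a b) = sabs k a * sabs k b.
Proof. destruct k. apply Rabs_mult. rewrite !sabs_C. apply (Complex.Cmod_mult a b). Qed.
Lemma sabs_opp k (a : scal k) : sabs k (sopp k a) = sabs k a.
Proof. destruct k. apply Rabs_Ropp. rewrite !sabs_C. apply (Complex.Cmod_opp a). Qed.
Lemma sabs_1 k : sabs k (sone k) = 1.
Proof. destruct k. apply Rabs_R1. rewrite !sabs_C. apply Complex.Cmod_1. Qed.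

Lemma scomplete k (u : nat -> scal k) :
  (forall eps, eps > 0 -> exists N, forall m n, (m >= N)%nat -> (n >= N)%nat ->
      sabs k (sadd k (u m) (sopp k (u n))) < eps) ->
  exists l, forall eps, eps > 0 -> exists N, forall n, (n >= N)%nat ->
      sabs k (sadd k (u n) (sopp k l)) < eps.
Proof.
  destruct k; intro H.
  - simpl in *. destruct (R_complete u) as [l Hl].
    { intros eps He. destruct (H eps He) as [N HN]. exists N. intros. unfold R_dist. apply HN; lia. }
    exists l. intros eps He. destruct (Hl eps He) as [N HN]. exists N. intros. apply HN; lia.
  - destruct (R_complete (fun n => fst (u n))) as [l1 H1].
    { intros eps He. destruct (H eps He) as [N HN]. exists N. intros m n Hm Hn. unfold R_dist.
      specialize (HN m n ltac:(lia) ltac:(lia)). rewrite sabs_C in HN.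
      eapply Rle_lt_trans; [|exact HN].
      eapply Rle_trans; [|apply Complex.Rmax_Cmod]. simpl. apply Rmax_l. }
    destruct (R_complete (fun n => snd (u n))) as [l2 H2].
    { intros eps He. destruct (H eps He) as [N HN]. exists N. intros m n Hm Hn. unfold R_dist.
      specialize (HN m n ltac:(lia) ltac:(lia)). rewrite sabs_C in HN.
      eapply Rle_lt_trans; [|exact HN].
      eapply Rle_trans; [|apply Complex.Rmax_Cmod]. simpl. apply Rmax_r. }
    exists (l1, l2). intros eps He.
    destruct (H1 (eps/2) ltac:(lra)) as [N1 HN1]. destruct (H2 (eps/2) ltac:(lra)) as [N2 HN2].
    exists (N1 + N2)%nat. intros n Hn.
    specialize (HN1 n ltac:(lia)). specialize (HN2 n ltac:(lia)). unfold R_dist in *.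
    rewrite sabs_C. simpl sadd.
    match goal with |- Complex.Cmod ?z < _ => replace z with (Complex.Cplus (fst (u n) - l1, 0) (0, snd (u n) - l2)) by (unfold Complex.Cplus; simpl; f_equal; ring) end.
    eapply Rle_lt_trans. apply Complex.Cmod_triangle.
    rewrite <- !sabs_C. simpl.
    replace ((fst (u n) - l1) * (fst (u n) - l1) + 0 * 0) with (Rsqr (fst (u n) - l1)) by (unfold Rsqr; ring).
    replace (0 * 0 + (snd (u n) - l2) * (snd (u n) - l2)) with (Rsqr (snd (u n) - l2)) by (unfold Rsqr; ring).
    rewrite !sqrt_Rsqr_abs. unfold Rminus in *. lra.
Qed.

Arguments vopp {k} {t} _.
Arguments vadd_assoc {k t} _ _ _.
Arguments vadd_comm {k t} _ _.
Arguments vadd_0 {k t} _.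
Arguments vadd_opp {k t} _.
Arguments vscal_distr_v {k t} _ _ _.
Arguments vscal_distr_s {k t} _ _ _.
Arguments vscal_assoc {k t} _ _ _.
Arguments vscal_1 {k t} _.
Arguments vopen_inter {k t} _ _ _ _.
Arguments vopen_union {k t} _ _.
Arguments vopen_full {k t}.
Arguments vhausdorff {k t} _ _ _.
Arguments vadd_cont {k t} _ _ _ _ _.
Arguments vscal_cont {k t} _ _ _ _ _.

Lemma vadd_0l {k} {X : TVS k} (x : X) : vadd (vzero X) x = x.
Proof. rewrite vadd_comm. apply vadd_0. Qed.

Lemma vadd_cancel {k} {X : TVS k} (x y z : X) : vadd x y = vadd x z -> y = z.
Proof.
  intro H. assert (E : vadd (vopp x) (vadd x y) = vadd (vopp x) (vadd x z)) by (rewrite H; auto).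
  rewrite !vadd_assoc in E. rewrite (vadd_comm (vopp x) x), vadd_opp, !vadd_0l in E. exact E.
Qed.

Lemma vscal_0s {k} {X : TVS k} (x : X) : vscal (szero k) x = vzero X.
Proof.
  apply (vadd_cancel (vscal (szero k) x)). rewrite vadd_0, <- vscal_distr_s, sadd_0l. auto.
Qed.

Lemma vscal_0v {k} {X : TVS k} (a : scal k) : vscal a (vzero X) = vzero X.
Proof.
  apply (vadd_cancel (vscal a (vzero X))). rewrite vadd_0, <- vscal_distr_v, vadd_0. auto.
Qed.

Lemma vscal_opp {k} {X : TVS k} (a : scal k) (x : X) : vscal (sopp k a) x = vopp (vscal a x).
Proof.
  apply (vadd_cancel (vscal a x)). rewrite vadd_opp, <- vscal_distr_s, sadd_opp, vscal_0s. auto.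
Qed.

Lemma vopp_eq {k} {X : TVS k} (x : X) : vopp x = vscal (sopp k (sone k)) x.
Proof. rewrite vscal_opp, vscal_1. auto. Qed.

Lemma vopp_add {k} {X : TVS k} (x y : X) : vopp (vadd x y) = vadd (vopp x) (vopp y).
Proof. rewrite !vopp_eq, vscal_distr_v. auto. Qed.

Lemma vopp_opp {k} {X : TVS k} (x : X) : vopp (vopp x) = x.
Proof. apply (vadd_cancel (vopp x)). rewrite vadd_opp, vadd_comm, vadd_opp. auto. Qed.

Lemma vadd_sub_cancel {k} {X : TVS k} (x y : X) : vadd (vadd x y) (vopp y) = x.
Proof. rewrite <- vadd_assoc, vadd_opp, vadd_0. auto. Qed.

Lemma vsub_eq0 {k} {X : TVS k} (x y : X) : vadd x (vopp y) = vzero X -> x = y.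
Proof. intro H. transitivity (vadd (vadd x (vopp y)) y).
  rewrite <- vadd_assoc, (vadd_comm (vopp y) y), vadd_opp, vadd_0; auto.
  rewrite H, vadd_0l; auto. Qed.

Lemma open_of_local {k} {X : TVS k} (S : X -> Prop) :
  (forall x, S x -> exists U, vopen U /\ U x /\ forall z, U z -> S z) -> vopen S.
Proof.
  intro H.
  assert (E : S = (fun x => exists U, (vopen U /\ forall z, U z -> S z) /\ U x)).
  { apply functional_extensionality; intro x; apply propositional_extensionality; split.
    - intro Hx. destruct (H x Hx) as [U [HU [HUx HUS]]]. exists U; auto.
    - intros [U [[_ HUS] HUx]]. auto. }
  rewrite E. apply vopen_union. intros U [HU _]; auto.
Qed.

Lemma open_transl {k} {X : TVS k} (W : X -> Prop) (a : X) : vopen W -> vopen (fun z => W (vadd z a)).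
Proof.
  intro HW. apply open_of_local. intros x Hx.
  destruct (vadd_cont x a W HW Hx) as [U [V [HU [HV [HUx [HVa Hc]]]]]].
  exists U; repeat split; auto.
Qed.

Lemma open_scal {k} {X : TVS k} (W : X -> Prop) (a : scal k) : vopen W -> vopen (fun z => W (vscal a z)).
Proof.
  intro HW. apply open_of_local. intros x Hx.
  destruct (vscal_cont a x W HW Hx) as [eps [U [He [HU [HUx Hc]]]]].
  exists U; repeat split; auto. intros z Hz. apply Hc; auto.
  rewrite sadd_opp, sabs_0. auto.
Qed.

Lemma open_opp {k} {X : TVS k} (W : X -> Prop) : vopen W -> vopen (fun z => W (vopp z)).
Proof.
  intro HW. assert (E : (fun z : X => W (vopp z)) = (fun z => W (vscal (sopp k (sone k)) z))).
  { apply functional_extensionality; intro; rewrite vopp_eq; auto. }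
  rewrite E. apply open_scal; auto.
Qed.

Lemma nbhd_sub {k} {X : TVS k} (G : X -> Prop) : vopen G -> G (vzero X) ->
  exists U, vopen U /\ U (vzero X) /\ forall u u', U u -> U u' -> G (vadd u (vopp u')).
Proof.
  intros HG H0. rewrite <- (vadd_0 (vzero X)) in H0.
  destruct (vadd_cont _ _ G HG H0) as [U1 [U2 [H1 [H2 [H1x [H2y Hc]]]]]].
  exists (fun x => U1 x /\ U2 (vopp x)). repeat split.
  - apply vopen_inter; auto. apply open_opp; auto.
  - auto.
  - rewrite vopp_eq, vscal_0v. auto.
  - intros u u' [Hu _] [_ Hu']. apply Hc; auto.
Qed.

Lemma nbhd_scal {k} {X : TVS k} (W : X -> Prop) : vopen W -> W (vzero X) ->
  exists eps U, eps > 0 /\ vopen U /\ U (vzero X) /\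
    forall b u, sabs k b < eps -> U u -> W (vscal b u).
Proof.
  intros HW H0. rewrite <- (vscal_0v (szero k)) in H0.
  destruct (vscal_cont _ _ W HW H0) as [eps [U [He [HU [HUx Hc]]]]].
  exists eps, U; repeat split; auto. intros b u Hb Hu. apply Hc; auto.
  rewrite sopp_0, sadd_0r. auto.
Qed.

Fixpoint comb {k} {X : TVS k} (n : nat) (c : nat -> scal k) (v : nat -> X) : X :=
  match n with
  | O => vzero X
  | S n => vadd (comb n c v) (vscal (c n) (v n))
  end.

Definition inspan {k} {X : TVS k} (n : nat) (v : nat -> X) (y : X) : Prop :=
  exists c, y = comb n c v.

Definition ind {k} {X : TVS k} (n : nat) (v : nat -> X) : Prop :=
  forall c, comb n c v = vzero X -> forall i, (i < n)%nat -> c i = szero k.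

Lemma comb_ext {k} {X : TVS k} n (c c' : nat -> scal k) (v v' : nat -> X) :
  (forall i, (i < n)%nat -> c i = c' i /\ v i = v' i) -> comb n c v = comb n c' v'.
Proof.
  induction n; simpl; intros H; auto.
  rewrite IHn by (intros; apply H; lia). destruct (H n ltac:(lia)) as [-> ->]. auto.
Qed.

Lemma comb_add {k} {X : TVS k} n (c d : nat -> scal k) (v : nat -> X) :
  comb n (fun i => sadd k (c i) (d i)) v = vadd (comb n c v) (comb n d v).
Proof.
  induction n; simpl. rewrite vadd_0; auto.
  rewrite IHn, vscal_distr_s.
  rewrite <- !vadd_assoc. f_equal. rewrite !vadd_assoc. f_equal. apply vadd_comm.
Qed.

Lemma comb_scal {k} {X : TVS k} n a (c : nat -> scal k) (v : nat -> X) :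
  vscal a (comb n c v) = comb n (fun i => smul k a (c i)) v.
Proof.
  induction n; simpl. apply vscal_0v.
  rewrite vscal_distr_v, IHn, vscal_assoc. auto.
Qed.

Lemma comb_zero {k} {X : TVS k} n (v : nat -> X) : comb n (fun _ => szero k) v = vzero X.
Proof. induction n; simpl; auto. rewrite IHn, vscal_0s, vadd_0. auto. Qed.

Lemma comb_delta {k} {X : TVS k} n j a (v : nat -> X) : (j < n)%nat ->
  comb n (fun i => if Nat.eqb i j then a else szero k) v = vscal a (v j).
Proof.
  induction n; simpl; intro H. lia.
  destruct (Nat.eqb_spec n j).
  - subst. rewrite (comb_ext _ _ (fun _ => szero k) _ v). rewrite comb_zero, vadd_0l. auto.
    intros i Hi. destruct (Nat.eqb_spec i j); [lia|auto].
  - rewrite IHn by lia. rewrite vscal_0s, vadd_0. auto.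
Qed.

Lemma comb_lin {k} {X : TVS k} (T : X -> X) n c v : Defs.linear X T ->
  T (comb n c v) = comb n c (fun i => T (v i)).
Proof.
  intros [Ha Hs]. assert (T0 : T (vzero X) = vzero X).
  { transitivity (T (vscal (szero k) (vzero X))). rewrite vscal_0s; auto. rewrite Hs, vscal_0s; auto. }
  induction n; simpl; auto. rewrite Ha, Hs, IHn. auto.
Qed.

Lemma comb_opp {k} {X : TVS k} n (c : nat -> scal k) (v : nat -> X) :
  vopp (comb n c v) = comb n (fun i => sopp k (c i)) v.
Proof.
  rewrite vopp_eq, comb_scal. apply comb_ext. intros; split; auto.
  rewrite smul_oppl, smul_1l. auto.
Qed.

Lemma comb_cont {k} {X : TVS k} n (c : nat -> scal k) (v : nat -> X) (Q : X -> Prop) :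
  vopen Q -> Q (comb n c v) -> exists delta, delta > 0 /\
    forall d, (forall i, (i < n)%nat -> sabs k (sadd k (d i) (sopp k (c i))) < delta) -> Q (comb n d v).
Proof.
  revert Q. induction n; simpl; intros Q HQ Hc.
  - exists 1. split; auto. lra.
  - destruct (vadd_cont _ _ Q HQ Hc) as [U1 [U2 [H1 [H2 [H1x [H2y Hcc]]]]]].
    destruct (IHn U1 H1 H1x) as [d1 [Hd1 Hd1']].
    destruct (vscal_cont _ _ U2 H2 H2y) as [eps [U [He [HU [HUx Hs]]]]].
    exists (Rmin d1 eps). split. apply Rmin_pos; auto.
    intros d Hd. apply Hcc.
    + apply Hd1'. intros i Hi. eapply Rlt_le_trans. apply Hd; lia. apply Rmin_l.
    + apply Hs; auto. eapply Rlt_le_trans. apply Hd; lia. apply Rmin_r.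
Qed.

Lemma fchoice {A B : Type} (P : A -> B -> Prop) : (forall x, exists y, P x y) -> exists f, forall x, P x (f x).
Proof.
  intro H. exists (fun x => proj1_sig (constructive_indefinite_description _ (H x))).
  intro x. exact (proj2_sig (constructive_indefinite_description _ (H x))).
Qed.

Definition rr (m : nat) : R := / INR (S m).

Lemma rr_pos m : rr m > 0.
Proof. unfold rr. apply Rinv_0_lt_compat. apply lt_0_INR. lia. Qed.

Lemma rr_mono m p : (m <= p)%nat -> rr p <= rr m.
Proof. intro H. unfold rr. apply Rinv_le_contravar. apply lt_0_INR; lia. apply le_INR; lia. Qed.

Lemma rr_arch eps : eps > 0 -> exists N, forall m, (m >= N)%nat -> rr m < eps.
Proof.
  intro He. destruct (archimed_cor1 eps He) as [N [HN HN0]]. exists N. intros m Hm.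
  eapply Rle_lt_trans; [|exact HN]. unfold rr. apply Rinv_le_contravar. apply lt_0_INR; lia. apply le_INR; lia.
Qed.

Definition Ccoord {k} {X : TVS k} (n : nat) (v : nat -> X) : Prop :=
  forall eps, eps > 0 -> exists G : X -> Prop, vopen G /\ G (vzero X) /\
    forall c, G (comb n c v) -> forall i, (i < n)%nat -> sabs k (c i) < eps.

Definition Cclosed {k} {X : TVS k} (n : nat) (v : nat -> X) : Prop :=
  forall y, (forall P : X -> Prop, vopen P -> P y -> exists c, P (comb n c v)) -> inspan n v y.

Fixpoint Uint {k} {X : TVS k} (U : nat -> X -> Prop) (m : nat) : X -> Prop :=
  match m with
  | O => U O
  | S m => fun x => Uint U m x /\ U (S m) x
  end.

Lemma Uint_iff {k} {X : TVS k} (U : nat -> X -> Prop) m x : Uint U m x <-> forall j, (j <= m)%nat -> U j x.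
Proof.
  induction m; simpl; split.
  - intros H j Hj. replace j with O by lia. auto.
  - intros H. apply H; lia.
  - intros [H1 H2] j Hj. destruct (Nat.eq_dec j (S m)). subst; auto. apply IHm; auto; lia.
  - intros H. split. apply IHm. intros; apply H; lia. apply H; lia.
Qed.

Lemma Uint_open {k} {X : TVS k} (U : nat -> X -> Prop) m : (forall j, vopen (U j)) -> vopen (Uint U m).
Proof. intro H. induction m; simpl; auto. apply vopen_inter; auto. Qed.

Lemma Uint_mono {k} {X : TVS k} (U : nat -> X -> Prop) m p x : (m <= p)%nat -> Uint U p x -> Uint U m x.
Proof. intros Hmp H. rewrite Uint_iff in *. intros; apply H; lia. Qed.

Lemma sub_sub {k} {X : TVS k} (a b y : X) :
  vadd (vadd a (vopp y)) (vopp (vadd b (vopp y))) = vadd a (vopp b).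
Proof.
  rewrite vopp_add, vopp_opp. rewrite <- vadd_assoc. f_equal.
  rewrite vadd_comm, vadd_sub_cancel. auto.
Qed.

Lemma comb_sub {k} {X : TVS k} n (c d : nat -> scal k) (v : nat -> X) :
  vadd (comb n c v) (vopp (comb n d v)) = comb n (fun i => sadd k (c i) (sopp k (d i))) v.
Proof. rewrite comb_opp, comb_add. auto. Qed.

Lemma sabs_sub_triangle k (a b c : scal k) :
  sabs k (sadd k a (sopp k c)) <= sabs k (sadd k a (sopp k b)) + sabs k (sadd k b (sopp k c)).
Proof.
  replace (sadd k a (sopp k c)) with (sadd k (sadd k a (sopp k b)) (sadd k b (sopp k c))).
  apply sabs_triangle.
  rewrite <- sadd_assoc, (sadd_assoc k (sopp k b) b), (sadd_comm k (sopp k b) b), sadd_opp, sadd_0l. auto.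
Qed.

Lemma sabs_sub_sym k (a b : scal k) : sabs k (sadd k a (sopp k b)) = sabs k (sadd k b (sopp k a)).
Proof.
  rewrite <- sabs_opp, sopp_add, sopp_opp, sadd_comm. auto.
Qed.

Lemma closed_of_coord {k} {X : TVS k} n (v : nat -> X) : Ccoord n v -> Cclosed n v.
Proof.
  intros HC y Hy.
  destruct (fchoice (fun m G => vopen G /\ G (vzero X) /\
     forall c, G (comb n c v) -> forall i, (i < n)%nat -> sabs k (c i) < rr m)) as [G HG].
  { intro m. apply HC. apply rr_pos. }
  destruct (fchoice (fun m U => vopen U /\ U (vzero X) /\
     forall u u', U u -> U u' -> G m (vadd u (vopp u')))) as [U HU].
  { intro m. destruct (HG m) as [H1 [H2 _]]. apply nbhd_sub; auto. }
  assert (Uo : forall j, vopen (U j)) by (intro j; apply (HU j)).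
  assert (Key : forall m c d, Uint U m (vadd (comb n c v) (vopp y)) -> Uint U m (vadd (comb n d v) (vopp y)) ->
            forall i, (i < n)%nat -> sabs k (sadd k (c i) (sopp k (d i))) < rr m).
  { intros m c d Hc Hd i Hi. rewrite Uint_iff in Hc, Hd.
    destruct (HU m) as [_ [_ HU3]]. destruct (HG m) as [_ [_ HG3]].
    specialize (HU3 _ _ (Hc m (le_n _)) (Hd m (le_n _))).
    rewrite sub_sub, comb_sub in HU3. exact (HG3 _ HU3 i Hi). }
  assert (Pm : forall m, vopen (fun z => Uint U m (vadd z (vopp y))) /\ Uint U m (vadd y (vopp y))).
  { intro m. split. apply open_transl, Uint_open; auto. rewrite vadd_opp.
    rewrite Uint_iff. intros j _. apply (HU j). }
  destruct (fchoice (fun m c => Uint U m (vadd (comb n c v) (vopp y)))) as [cm Hcm].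
  { intro m. destruct (Pm m) as [P1 P2]. apply (Hy _ P1 P2). }
  destruct (fchoice (fun i l => (i < n)%nat -> forall eps, eps > 0 -> exists N, forall p, (p >= N)%nat ->
      sabs k (sadd k (cm p i) (sopp k l)) < eps)) as [l Hl].
  { intro i. destruct (Nat.lt_ge_cases i n) as [Hi|Hi].
    - destruct (scomplete k (fun p => cm p i)) as [l Hl].
      + intros eps He. destruct (rr_arch eps He) as [N HN]. exists N. intros m p Hm Hp.
        destruct (Nat.le_ge_cases m p).
        * eapply Rlt_trans. apply (Key m). apply Hcm. eapply Uint_mono; [|apply Hcm]; auto. auto. apply HN; auto.
        * eapply Rlt_trans. apply (Key p). eapply Uint_mono; [|apply Hcm]; auto. apply Hcm. auto. apply HN; auto.
      + exists l. intros _. exact Hl.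
    - exists (szero k). intro; lia. }
  assert (Bd : forall m d, Uint U m (vadd (comb n d v) (vopp y)) -> forall i, (i < n)%nat ->
      sabs k (sadd k (d i) (sopp k (l i))) < 2 * rr m).
  { intros m d Hd i Hi. destruct (Hl i Hi (rr m) (rr_pos m)) as [N HN].
    pose (p := (m + N)%nat).
    eapply Rle_lt_trans. apply (sabs_sub_triangle _ _ (cm p i)).
    assert (sabs k (sadd k (d i) (sopp k (cm p i))) < rr m).
    { apply Key; auto. eapply Uint_mono; [|apply Hcm]. unfold p; lia. }
    assert (sabs k (sadd k (cm p i) (sopp k (l i))) < rr m) by (apply HN; unfold p; lia).
    lra. }
  exists l. apply NNPP. intro Hne.
  destruct (vhausdorff _ _ Hne) as [P [Q [HP [HQ [HPy [HQw Hdis]]]]]].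
  destruct (comb_cont n l v Q HQ HQw) as [delta [Hdel Hdel']].
  destruct (rr_arch (delta / 2)) as [m Hm]. lra.
  specialize (Hm m (le_n _)).
  destruct (Hy (fun z => P z /\ Uint U m (vadd z (vopp y)))) as [d [Hd1 Hd2]].
  { apply vopen_inter; auto. apply (Pm m). }
  { split; auto. apply (Pm m). }
  apply (Hdis (comb n d v)). split; auto. apply Hdel'. intros i Hi.
  specialize (Bd m d Hd2 i Hi). lra.
Qed.

Lemma sabs_sofR k t : sabs k (sofR k t) = Rabs t.
Proof. destruct k; simpl; auto. replace (t * t + 0 * 0) with (Rsqr t) by (unfold Rsqr; ring). apply sqrt_Rsqr_abs. Qed.

Lemma sabs_pos k (a : scal k) : a <> szero k -> sabs k a > 0.
Proof. intro H. destruct (sabs_ge0 k a); auto. exfalso; apply H, sabs_eq0; auto. Qed.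

Lemma sabs_inv k (a : scal k) : a <> szero k -> sabs k (sinv k a) = / sabs k a.
Proof.
  intro H. assert (E := sinv_r k a H). apply (f_equal (sabs k)) in E. rewrite sabs_mul, sabs_1 in E.
  assert (sabs k a > 0) by (apply sabs_pos; auto).
  apply (Rmult_eq_reg_l (sabs k a)). rewrite E. field. lra. lra.
Qed.

Lemma vadd_opp_cancel {k} {X : TVS k} (x y : X) : vadd (vadd x (vopp y)) y = x.
Proof. rewrite <- vadd_assoc, (vadd_comm (vopp y) y), vadd_opp, vadd_0. auto. Qed.

Lemma ind_pred {k} {X : TVS k} n (v : nat -> X) : ind (S n) v -> ind n v.
Proof.
  intros H c Hc i Hi.
  pose (c' := fun j => if Nat.ltb j n then c j else szero k).
  assert (E : comb (S n) c' v = vzero X).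
  { simpl. unfold c' at 2. rewrite Nat.ltb_irrefl, vscal_0s, vadd_0.
    rewrite <- Hc. apply comb_ext. intros j Hj; split; auto. unfold c'. destruct (Nat.ltb_spec j n); auto; lia. }
  specialize (H c' E i ltac:(lia)). unfold c' in H. destruct (Nat.ltb_spec i n); auto; lia.
Qed.

Lemma coord_all {k} {X : TVS k} n (v : nat -> X) : ind n v -> Ccoord n v.
Proof.
  revert v. induction n; intros v Hind.
  - intros eps He. exists (fun _ => True). split; [apply vopen_full|]. split; auto. intros; lia.
  - assert (IH := IHn v (ind_pred n v Hind)).
    assert (Cl := closed_of_coord n v IH).
    assert (Nsp : ~ inspan n v (v n)).
    { intros [c Hc]. pose (c' := fun j => if Nat.ltb j n then c j else sopp k (sone k)).
      assert (E : comb (S n) c' v = vzero X).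
      { simpl. unfold c' at 2. rewrite Nat.ltb_irrefl, vscal_opp, vscal_1.
        rewrite (comb_ext _ _ c _ v). rewrite <- Hc. apply vadd_opp.
        intros j Hj; split; auto. unfold c'. destruct (Nat.ltb_spec j n); auto; lia. }
      specialize (Hind c' E n ltac:(lia)). unfold c' in Hind. rewrite Nat.ltb_irrefl in Hind.
      apply (sone_neq0 k). rewrite <- (sopp_opp k (sone k)), Hind, sopp_0. auto. }
    assert (HP : exists P : X -> Prop, vopen P /\ P (v n) /\ forall c, ~ P (comb n c v)).
    { apply NNPP. intro Hn. apply Nsp. apply Cl. intros P HP HPv. apply NNPP. intro Hn2.
      apply Hn. exists P. repeat split; auto. intros c Hc. apply Hn2. exists c; auto. }
    destruct HP as [P [HP [HPv HPc]]].
    intros eps He.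
    assert (HP' : vopen (fun z => P (vadd z (v n))) /\ P (vadd (vzero X) (v n))).
    { split. apply open_transl; auto. rewrite vadd_0l; auto. }
    destruct (nbhd_scal _ (proj1 HP') (proj2 HP')) as [eps1 [U1 [He1 [HU1 [HU10 HU1c]]]]].
    destruct (IH eps He) as [GI [HGI [HGI0 HGIc]]].
    assert (HGI0' : GI (vadd (vzero X) (vzero X))) by (rewrite vadd_0; auto).
    destruct (vadd_cont _ _ _ HGI HGI0') as [Ua [Ub [HUa [HUb [HUa0 [HUb0 HUab]]]]]].
    assert (HUb0' : Ub (vscal (szero k) (v n))) by (rewrite vscal_0s; auto).
    destruct (vscal_cont _ _ _ HUb HUb0') as [eps2 [U2 [He2 [HU2 [HU2v HU2c]]]]].
    set (d0 := Rmin eps eps2).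
    assert (Hd0 : d0 > 0) by (apply Rmin_pos; auto).
    set (t := sofR k (2 / (d0 * eps1))).
    assert (Ht : sabs k t = 2 / (d0 * eps1)).
    { unfold t. rewrite sabs_sofR. apply Rabs_right. apply Rle_ge. apply Rlt_le.
      apply Rdiv_lt_0_compat. lra. apply Rmult_lt_0_compat; auto. }
    assert (Htnz : t <> szero k).
    { intro E. rewrite E, sabs_0 in Ht. assert (2 / (d0 * eps1) > 0).
      apply Rdiv_lt_0_compat. lra. apply Rmult_lt_0_compat; auto. lra. }
    exists (fun x => U1 (vscal t x) /\ Ua x). split; [|split].
    + apply vopen_inter; auto. apply open_scal; auto.
    + rewrite vscal_0v. auto.
    + intros c [Hc1 Hc2].
      assert (Hcn : sabs k (c n) < d0).
      { apply Rnot_le_lt. intro Hge.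
        assert (Hcnz : c n <> szero k).
        { intro E. rewrite E, sabs_0 in Hge. lra. }
        set (b := smul k (sopp k (sinv k (c n))) (sinv k t)).
        assert (Hb : sabs k b < eps1).
        { unfold b. rewrite sabs_mul, sabs_opp, !sabs_inv, Ht by auto.
          assert (sabs k (c n) > 0) by lra.
          apply (Rmult_lt_reg_l (sabs k (c n))); auto.
          replace (sabs k (c n) * (/ sabs k (c n) * / (2 / (d0 * eps1)))) with (d0 * eps1 / 2) by (field; lra).
          assert (d0 * eps1 <= sabs k (c n) * eps1) by (apply Rmult_le_compat_r; lra).
          assert (d0 * eps1 > 0) by (apply Rmult_lt_0_compat; auto). lra. }
        specialize (HU1c _ _ Hb Hc1). simpl in HU1c.
        rewrite <- vscal_assoc in HU1c.
        replace (smul k b t) with (sopp k (sinv k (c n))) in HU1c.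
        2:{ unfold b. rewrite <- smul_assoc, (smul_comm k (sinv k t) t), sinv_r by auto.
            rewrite smul_comm, smul_1l. auto. }
        simpl in HU1c. rewrite vscal_distr_v, <- vscal_assoc in HU1c.
        replace (smul k (sopp k (sinv k (c n))) (c n)) with (sopp k (sone k)) in HU1c.
        2:{ rewrite smul_oppl, smul_comm, sinv_r; auto. }
        rewrite (vscal_opp (sone k) (v n)), vscal_1, vadd_opp_cancel, comb_scal in HU1c.
        eapply HPc. exact HU1c. }
      intros i Hi. destruct (Nat.eq_dec i n) as [->|Hin].
      * eapply Rlt_le_trans. exact Hcn. apply Rmin_l.
      * apply HGIc; [|lia].
        replace (comb n c v) with (vadd (comb (S n) c v) (vscal (sopp k (c n)) (v n))).
        apply HUab; auto. apply HU2c; auto. rewrite sopp_0, sadd_0r, sabs_opp.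
        eapply Rlt_le_trans. exact Hcn. apply Rmin_r.
        simpl. rewrite vscal_opp. apply vadd_sub_cancel.
Qed.

Corollary closed_span {k} {X : TVS k} n (v : nat -> X) : ind n v -> Cclosed n v.
Proof. intro H. apply closed_of_coord, coord_all; auto. Qed.

Definition sig_m (m j : nat) : nat := if Nat.ltb j m then j else S j.

Lemma comb_drop {k} {X : TVS k} n m (e : nat -> scal k) (u : nat -> X) : (m <= n)%nat ->
  comb (S n) e u = vadd (comb n (fun j => e (sig_m m j)) (fun j => u (sig_m m j))) (vscal (e m) (u m)).
Proof.
  induction n; intro Hm.
  - replace m with O by lia. simpl. auto.
  - destruct (Nat.eq_dec m (S n)) as [->|Hne].
    + change (comb (S (S n)) e u) with (vadd (comb (S n) e u) (vscal (e (S n)) (u (S n)))). f_equal.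
      apply comb_ext. intros i Hi. unfold sig_m. destruct (Nat.ltb_spec i (S n)); [auto|lia].
    + change (comb (S (S n)) e u) with (vadd (comb (S n) e u) (vscal (e (S n)) (u (S n)))).
      rewrite IHn by lia. simpl.
      assert (Hs : sig_m m n = S n) by (unfold sig_m; destruct (Nat.ltb_spec n m); lia).
      rewrite Hs.
      rewrite <- !vadd_assoc. f_equal. apply vadd_comm.
Qed.

Fixpoint ssum {k} (n : nat) (f : nat -> scal k) : scal k :=
  match n with O => szero k | S n => sadd k (ssum n f) (f n) end.

Lemma vadd_swap4 {k} {X : TVS k} (a b c d : X) : vadd (vadd a b) (vadd c d) = vadd (vadd a c) (vadd b d).
Proof. rewrite <- !vadd_assoc. f_equal. rewrite !vadd_assoc. f_equal. apply vadd_comm. Qed.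

Lemma comb_affine {k} {X : TVS k} n (d g : nat -> scal k) (f : nat -> X) (w : X) :
  comb n d (fun j => vadd (f j) (vscal (g j) w)) =
  vadd (comb n d f) (vscal (ssum n (fun j => smul k (d j) (g j))) w).
Proof.
  induction n; simpl. rewrite vscal_0s, vadd_0. auto.
  rewrite IHn, vscal_distr_v, vscal_distr_s, vscal_assoc. apply vadd_swap4.
Qed.

Lemma steinitz {k} {X : TVS k} N : forall (b u : nat -> X), ind (S N) u ->
  (forall j, (j <= N)%nat -> inspan N b (u j)) -> False.
Proof.
  induction N; intros b u Hind Hsp.
  - destruct (Hsp O (le_n _)) as [c Hc]. simpl in Hc.
    specialize (Hind (fun _ => sone k)). apply (sone_neq0 k). apply (Hind) with O; [|lia].
    simpl. rewrite vadd_0l, vscal_1. auto.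
  - destruct (fchoice (fun j C => (j <= S N)%nat -> u j = comb (S N) C b)) as [C HC].
    { intro j. destruct (Nat.le_gt_cases j (S N)) as [Hj|Hj].
      - destruct (Hsp j Hj) as [c Hc]. exists c; auto.
      - exists (fun _ => szero k). intro; lia. }
    destruct (classic (exists m, (m <= S N)%nat /\ C m N <> szero k)) as [[m [Hm Hbm]] | Hall].
    + set (g := fun j => sopp k (smul k (C (sig_m m j) N) (sinv k (C m N)))).
      set (u' := fun j => vadd (u (sig_m m j)) (vscal (g j) (u m))).
      apply (IHN b u').
      * intros d Hd.
        set (s := ssum (S N) (fun j => smul k (d j) (g j))).
        set (e := fun i => if Nat.ltb i m then d i else if Nat.eqb i m then s else d (pred i)).
        assert (E : comb (S (S N)) e u = vzero X).
        { rewrite (comb_drop (S N) m) by auto.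
          rewrite <- Hd. unfold u'. rewrite comb_affine. f_equal.
          - apply comb_ext. intros i Hi. split; auto. unfold e, sig_m.
            destruct (Nat.ltb_spec i m). destruct (Nat.ltb_spec i m); auto; lia.
            destruct (Nat.ltb_spec (S i) m); [lia|]. destruct (Nat.eqb_spec (S i) m); [lia|]. auto.
          - unfold e. rewrite Nat.ltb_irrefl, Nat.eqb_refl. auto. }
        intros i Hi. specialize (Hind e E (sig_m m i)). unfold sig_m in Hind. unfold e in Hind.
        destruct (Nat.ltb_spec i m).
        -- destruct (Nat.ltb_spec i m); [|lia]. apply Hind; lia.
        -- destruct (Nat.ltb_spec (S i) m); [lia|]. destruct (Nat.eqb_spec (S i) m); [lia|].
           apply Hind; lia.
      * intros j Hj. assert (Hs : (sig_m m j <= S N)%nat) by (unfold sig_m; destruct (Nat.ltb_spec j m); lia).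
        exists (fun i => sadd k (C (sig_m m j) i) (smul k (g j) (C m i))).
        unfold u'. rewrite (HC _ Hs), (HC _ Hm), comb_scal, <- comb_add.
        simpl. replace (sadd k (C (sig_m m j) N) (smul k (g j) (C m N))) with (szero k).
        rewrite vscal_0s, vadd_0. auto.
        unfold g. rewrite smul_oppl, <- smul_assoc, (smul_comm k (sinv k _)), sinv_r by auto.
        rewrite smul_comm, smul_1l, sadd_opp. auto.
    + apply (IHN b u). apply ind_pred; auto.
      intros j Hj. exists (C j). rewrite (HC j) by lia. simpl.
      replace (C j N) with (szero k). rewrite vscal_0s, vadd_0. auto.
      apply NNPP. intro Hn. apply Hall. exists j. split; auto; lia.
Qed.

Lemma smul_opp_opp k (a b : scal k) : smul k (sopp k a) (sopp k b) = smul k a b.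
Proof. scal_ring k. Qed.

Lemma ind_ext {k} {X : TVS k} N (v : nat -> X) : ind N v -> ~ inspan N v (v N) -> ind (S N) v.
Proof.
  intros H Hn c Hc i Hi. simpl in Hc.
  assert (HcN : c N = szero k).
  { apply NNPP. intro Hz. apply Hn.
    assert (E : comb N c v = vscal (sopp k (c N)) (v N)).
    { apply (vadd_cancel (vscal (c N) (v N))). rewrite vadd_comm, Hc, <- vscal_distr_s, sadd_opp, vscal_0s. auto. }
    exists (fun j => smul k (sopp k (sinv k (c N))) (c j)). rewrite <- comb_scal.
    rewrite E, <- vscal_assoc, smul_opp_opp, smul_comm, sinv_r, vscal_1 by auto. auto. }
  destruct (Nat.eq_dec i N) as [->|Hne]; auto.
  apply H; [|lia]. rewrite HcN, vscal_0s, vadd_0 in Hc. auto.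
Qed.

Definition orb {k} {X : TVS k} (T : X -> X) (x : X) (i : nat) : X := Nat.iter i T x.

Lemma span_comb {k} {X : TVS k} N (w : nat -> X) n c (f : nat -> X) :
  (forall j, (j < n)%nat -> inspan N w (f j)) -> inspan N w (comb n c f).
Proof.
  induction n; simpl; intro H.
  - exists (fun _ => szero k). rewrite comb_zero. auto.
  - destruct IHn as [d Hd]. intros; apply H; lia.
    destruct (H n ltac:(lia)) as [e He].
    exists (fun i => sadd k (d i) (smul k (c n) (e i))). rewrite comb_add, <- comb_scal, Hd, He. auto.
Qed.

Lemma orbit_in_span {k} {X : TVS k} (T : X -> X) x N : Defs.linear X T ->
  inspan N (orb T x) (orb T x N) -> forall i, inspan N (orb T x) (orb T x i).
Proof.
  intros HT HB.
  assert (Hsm : forall i, (i <= N)%nat -> inspan N (orb T x) (orb T x i)).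
  { intros i Hi. destruct (Nat.eq_dec i N) as [->|Hne]; auto.
    exists (fun j => if Nat.eqb j i then sone k else szero k). rewrite comb_delta by lia. rewrite vscal_1; auto. }
  induction i.
  - apply Hsm; lia.
  - destruct IHi as [c Hc]. change (orb T x (S i)) with (T (orb T x i)).
    rewrite Hc, comb_lin by auto. apply span_comb. intros j Hj. apply (Hsm (S j)). lia.
Qed.

Lemma ind_of_lin_indep {k} {X : TVS k} (A : X -> Prop) (e : nat -> X) n :
  lin_indep X A -> (forall m p, e m = e p -> m = p) -> (forall m, A (e m)) -> ind n e.
Proof.
  intros HL Hinj HA c Hc i Hi.
  set (l := map (fun j => (c j, e j)) (seq 0 n)).
  assert (Hs : lsum X l = comb n c e).
  { unfold l. clear. induction n; [simpl; auto|].
    rewrite seq_S, map_app. 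
    assert (Happ : forall l1 l2, lsum X (l1 ++ l2) = vadd (lsum X l1) (lsum X l2)).
    { induction l1; intros; simpl. rewrite vadd_0l; auto. rewrite IHl1, vadd_assoc. auto. }
    rewrite Happ, IHn. simpl. rewrite vadd_0. auto. }
  assert (Hnd : NoDup (map snd l)).
  { unfold l. rewrite map_map. simpl. apply Injective_map_NoDup. intros a b; apply Hinj. apply seq_NoDup. }
  assert (Hf : Forall (fun p => A (snd p)) l).
  { apply Forall_forall. intros p Hp. unfold l in Hp. apply in_map_iff in Hp. destruct Hp as [j [<- _]]. apply HA. }
  rewrite Hc in Hs. specialize (HL l Hnd Hf Hs). rewrite Forall_forall in HL.
  apply (HL (c i, e i)). unfold l. apply in_map_iff. exists i. split; auto. apply in_seq. lia.
Qed.

Lemma min_ex (P : nat -> Prop) N : P N -> exists m, P m /\ forall j, (j < m)%nat -> ~ P j.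
Proof.
  induction N as [N IH] using (well_founded_induction Wf_nat.lt_wf). intro HN.
  destruct (classic (exists j, (j < N)%nat /\ P j)) as [[j [Hj Pj]]|Hn].
  - apply (IH j Hj Pj).
  - exists N. split; auto. intros j Hj Pj. apply Hn. exists j; auto.
Qed.

Lemma ind_upto {k} {X : TVS k} (v : nat -> X) m : (forall j, (j < m)%nat -> ~ inspan j v (v j)) -> ind m v.
Proof.
  induction m; intro H.
  - intros c _ i Hi; lia.
  - apply ind_ext. apply IHm. intros; apply H; lia. apply H; lia.
Qed.

Lemma no_bad {k} {X : TVS k} (T0 : X -> X) x0 :
  Lop X T0 -> dense X (orbit X T0 x0) -> (exists A, Sigma X A) ->
  forall N, ~ inspan N (orb T0 x0) (orb T0 x0 N).
Proof.
  intros [HTl HTc] Hd [A [[e [Hinj He]] [HAd HAl]]] N HB.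
  destruct (min_ex (fun m => inspan m (orb T0 x0) (orb T0 x0 m)) N HB) as [m [Hm Hmin]].
  assert (Hi := ind_upto (orb T0 x0) m Hmin).
  assert (Hsp := orbit_in_span T0 x0 m HTl Hm).
  assert (Hie : ind (S m) e).
  { apply (ind_of_lin_indep A); auto. intro j. apply He. exists j; auto. }
  assert (Hex : exists j, (j <= m)%nat /\ ~ inspan m (orb T0 x0) (e j)).
  { apply NNPP. intro Hn. apply (steinitz m (orb T0 x0) e Hie). intros j Hj.
    apply NNPP. intro Hn2. apply Hn. exists j. auto. }
  destruct Hex as [j [Hj Hnj]].
  assert (Cl := closed_span m _ Hi).
  assert (HP : exists P : X -> Prop, vopen P /\ P (e j) /\ forall c, ~ P (comb m c (orb T0 x0))).
  { apply NNPP. intro Hn. apply Hnj. apply Cl. intros P HP HPv. apply NNPP. intro Hn2.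
    apply Hn. exists P. repeat split; auto. intros c Hc. apply Hn2. exists c; auto. }
  destruct HP as [P [HP [HPe HPc]]].
  destruct (Hd P HP (ex_intro _ (e j) HPe)) as [z [Hz [n Hn]]].
  destruct (Hsp n) as [c Hc]. unfold orb in Hc. rewrite <- Hn in Hc. subst z. apply (HPc c). unfold orb. rewrite <- Hc. auto.
Qed.

Lemma orbit_sigma {k} {X : TVS k} (T0 : X -> X) x0 :
  Lop X T0 -> dense X (orbit X T0 x0) -> (exists A, Sigma X A) -> Sigma X (orbit X T0 x0).
Proof.
  intros HT Hd HA.
  assert (NB := no_bad T0 x0 HT Hd HA).
  assert (Hind : forall M, ind M (orb T0 x0)) by (intro M; apply ind_upto; intros; apply NB).
  split; [|split; auto].
  - exists (orb T0 x0). split.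
    + assert (H : forall m p, (m < p)%nat -> orb T0 x0 m <> orb T0 x0 p).
      { intros m p Hmp E. apply (NB p). exists (fun j => if Nat.eqb j m then sone k else szero k).
        rewrite comb_delta, vscal_1 by auto. auto. }
      intros m p E. destruct (Nat.lt_trichotomy m p) as [Hl|[Hl|Hl]]; auto.
      exfalso; apply (H m p Hl E). exfalso; apply (H p m Hl); auto.
    + intro y. unfold orbit, orb. split; intros [n Hn]; exists n; auto.
  - intros l Hnd Hf Hs.
    destruct (fchoice (fun (p : (scal k * X)%type) n => orbit X T0 x0 (snd p) -> snd p = orb T0 x0 n)) as [idx Hidx].
    { intros p. destruct (classic (orbit X T0 x0 (snd p))) as [[n Hn]|Hn].
      - exists n. auto.
      - exists O. intro; contradiction. }
    assert (Hl : forall p, In p l -> snd p = orb T0 x0 (idx p)).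
    { intros p Hp. apply Hidx. rewrite Forall_forall in Hf. apply Hf; auto. }
    set (M := fold_right (fun p acc => Nat.max (S (idx p)) acc) O l).
    assert (HM : forall p, In p l -> (idx p < M)%nat).
    { unfold M. clear. induction l as [|a l IHl]; intros p Hp; simpl in Hp; [contradiction|]; cbn [fold_right].
      destruct Hp as [E|Hp]. subst. eapply Nat.lt_le_trans; [|apply Nat.le_max_l]; lia. eapply Nat.lt_le_trans; [apply IHl; exact Hp|apply Nat.le_max_r]. }
    set (cf := fun (l0 : list (scal k * X)) i => fold_right (fun p acc => sadd k (if Nat.eqb (idx p) i then fst p else szero k) acc) (szero k) l0).
    assert (Hsum : forall l0, (forall p, In p l0 -> snd p = orb T0 x0 (idx p) /\ (idx p < M)%nat) ->
              lsum X l0 = comb M (cf l0) (orb T0 x0)).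
    { induction l0; intro H0; simpl.
      - unfold cf; simpl. rewrite comb_zero. auto.
      - rewrite IHl0 by (intros; apply H0; right; auto). unfold cf at 2. simpl. rewrite comb_add.
        destruct (H0 a (or_introl eq_refl)) as [E1 E2].
        rewrite (comb_ext _ (fun i => if Nat.eqb (idx a) i then fst a else szero k) (fun i => if Nat.eqb i (idx a) then fst a else szero k) _ (orb T0 x0)).
        rewrite comb_delta, E1 by auto. auto.
        intros i Hi. split; auto. destruct (Nat.eqb_spec (idx a) i), (Nat.eqb_spec i (idx a)); auto; lia. }
    assert (Hzero : forall l0 i, (forall q, In q l0 -> idx q <> i) -> cf l0 i = szero k).
    { induction l0; intros i H0; simpl; auto. unfold cf; simpl. destruct (Nat.eqb_spec (idx a) i).
      exfalso; apply (H0 a); [left|]; auto. rewrite sadd_0l. apply IHl0. intros; apply H0; right; auto. }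
    assert (Hcf : forall l0, NoDup (map snd l0) -> (forall p, In p l0 -> snd p = orb T0 x0 (idx p)) ->
              forall p, In p l0 -> cf l0 (idx p) = fst p).
    { induction l0; intros Hnd0 H0 p Hp; [contradiction|]. simpl in Hnd0. inversion Hnd0 as [|x0_ l0_ H1 H2]; subst.
      unfold cf; simpl. fold (cf l0 (idx p)).
      destruct Hp as [E0|Hp].
      - subst p. rewrite Nat.eqb_refl, Hzero. apply sadd_0r.
        intros q Hq E. apply H1. apply in_map_iff. exists q. split; auto.
        rewrite (H0 q), (H0 a) by (try (left; reflexivity); right; auto). rewrite E. auto.
      - destruct (Nat.eqb_spec (idx a) (idx p)) as [E|E].
        + exfalso. apply H1. apply in_map_iff. exists p. split; auto.
          rewrite (H0 p), (H0 a) by (try (left; reflexivity); right; auto). rewrite E. auto.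
        + rewrite sadd_0l. apply IHl0; auto. intros; apply H0; right; auto. }
    rewrite Hsum in Hs by (intros; split; auto).
    apply Forall_forall. intros p Hp. rewrite <- (Hcf l Hnd Hl p Hp).
    apply (Hind M _ Hs). auto.
Qed.

Lemma iter_conj {k} {X : TVS k} (J S T0 : X -> X) x0 n : (forall x, S (J x) = x) ->
  Nat.iter n (fun z => J (T0 (S z))) (J x0) = J (Nat.iter n T0 x0).
Proof. intro H. induction n; simpl; auto. rewrite IHn, H. auto. Qed.

Theorem lemma1p2 (k : Kind) (X : TVS k) :
  G_space X ->
  (exists T0 : X -> X, hypercyclic X T0) ->
  forall A : X -> Prop, Sigma X A ->
    exists (T : X -> X) (x : X), Lop X T /\ (forall y, A y <-> orbit X T x y).
Proof.
  intros [_ [HA Htr]] [T0 [HT0 [x0 Hd]]] A HAs.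
  assert (HO := orbit_sigma T0 x0 HT0 Hd HA).
  destruct (Htr _ _ HO HAs) as [J [[HJ [S [HS [HSJ HJS]]]] HJA]].
  exists (fun z => J (T0 (S z))), (J x0). split.
  - destruct HJ as [[HJa HJs] HJc], HS as [[HSa HSs] HSc], HT0 as [[HTa HTs] HTc]. split; [split|].
    + intros x y. rewrite HSa, HTa, HJa. auto.
    + intros a x. rewrite HSs, HTs, HJs. auto.
    + intros U HU. apply (HSc _ (HTc _ (HJc U HU))).
  - intro y. rewrite <- HJA. unfold image, orbit. split.
    + intros [z [[n Hn] Hz]]. exists n. rewrite iter_conj by auto. subst; auto.
    + intros [n Hn]. exists (Nat.iter n T0 x0). split. exists n; auto. rewrite Hn, iter_conj; auto.
Qed.
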